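(* Let $n\ge 2$ be an integer and $m=\min\{k\in\mathbb{N}: n\le\tfrac12(k^3-k^2)\}$. Then $\chi_{L_2}(P_n)=m$. Moreover, for the path $P_n=v_1v_2\cdots v_n$ there exists a neighbor locating coloring $f_n:V(P_n)\to[m]$ (onto) such that $f_n(v_{n-1})=2$ and $f_n(v_n)=1$; furthermore, if $n\ge 9$ then also $f_n(v_{n-2})=m$, and if $n\ge 9$ and $n\ne\tfrac12(m^3-m^2)-1$ then also $f_n(v_1)=2$ and $f_n(v_2)=1$.
   Context: All graphs are finite and simple; $P_n=v_1v_2\cdots v_n$ is the path with edges $v_iv_{i+1}$, $1\le i<n$. A proper $k$-coloring of $G$ is a map $f$ from $V(G)$ onto $[k]=\{1,\dots,k\}$ with adjacent vertices receiving different colors; $f(S)=\{f(u):u\in S\}$ and $N_G(u)$ is the neighborhood of $u$. A proper $k$-coloring $f$ is a neighbor locating coloring if for any two distinct vertices $u,v$ with $f(u)=f(v)$ we have $f(N_G(u))\ne f(N_G(v))$; $\chi_{L_2}(G)$ is the minimum number of colors in a neighbor locating coloring of $G$. *)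

(* Defs.v *)
From mathcomp Require Import all_boot.
Set Implicit Arguments. Unset Strict Implicit. Unset Printing Implicit Defensive.

(* Path P_n on vertex set 'I_n: vertex i : 'I_n stands for v_(i+1);
   edges v_i v_(i+1). *)
Definition path_rel (n : nat) : rel 'I_n :=
  fun i j => (i.+1 == j :> nat) || (j.+1 == i :> nat).

(* f(N_G(u)) as a sequence; compared as sets via =i *)
Definition nbcols (T : finType) (e : rel T) (f : T -> nat) (u : T) : seq nat :=
  [seq f w | w <- enum T & e u w].

Definition onto_colors (T : finType) (k : nat) (f : T -> nat) : Prop :=
  (forall x, 1 <= f x <= k) /\ (forall c, 1 <= c <= k -> exists x, f x = c).

Definition proper_coloring (T : finType) (e : rel T) (k : nat) (f : T -> nat) : Prop :=
  onto_colors k f /\ (forall u v, e u v -> f u <> f v).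

Definition nl_coloring (T : finType) (e : rel T) (k : nat) (f : T -> nat) : Prop :=
  proper_coloring e k f /\
  (forall u v, u <> v -> f u = f v -> ~ (nbcols e f u =i nbcols e f v)).

Definition is_chiL2 (T : finType) (e : rel T) (m : nat) : Prop :=
  (exists f, nl_coloring e m f) /\ (forall k f, nl_coloring e k f -> m <= k).

(* Main.v *)
Require Import Defs.
From mathcomp Require Import all_boot.
From mathcomp Require Import zify.
Set Implicit Arguments. Unset Strict Implicit. Unset Printing Implicit Defensive.

Definition K (a b c : nat) : nat * nat * nat := (b, minn a c, maxn a c).
Fixpoint tri (l : seq nat) : seq (nat * nat * nat) :=
  match l with
  | a :: ((b :: c :: _) as t) => K a b c :: tri t
  | _ => [::]
  end.

Lemma tri_cons a t : 1 < size t -> tri (a :: t) = K a (nth 0 t 0) (nth 0 t 1) :: tri t.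
Proof. by case: t => [|b [|c t]]. Qed.

Lemma size_tri l : size (tri l) = (size l).-2.
Proof.
elim: l => [|a t IH] //; case: t IH => [|b [|c t]] IH //.
by rewrite tri_cons //= IH.
Qed.

Lemma nth_tri l i : i.+2 < size l ->
  nth (0,0,0) (tri l) i = K (nth 0 l i) (nth 0 l i.+1) (nth 0 l i.+2).
Proof.
elim: l i => [|a t IH] i //; case: t IH => [|b [|c t]] IH //= H.
case: i H => [|i] H //=.
by rewrite IH.
Qed.

Lemma triS l1 a b l2 : tri (l1 ++ a :: b :: l2) = tri (l1 ++ [:: a; b]) ++ tri (a :: b :: l2).
Proof.
elim: l1 => [|c l1 IH] //.
rewrite !cat_cons tri_cons ?size_cat ?addnS // [tri (c :: _)]tri_cons ?size_cat ?addnS //.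
rewrite IH /= !nth_cat.
by case: l1 {IH} => [|d [|e l1]].
Qed.

Lemma mem_tri l k : k \in tri l -> [/\ k.1.1 \in l, k.1.2 \in l & k.2 \in l].
Proof.
elim: l => [|a t IH] //; case: t IH => [|b [|c t]] IH //.
rewrite tri_cons //= inE => /orP [/eqP -> /= | /IH [H1 H2 H3]].
  rewrite /minn /maxn; split; rewrite !inE ?eqxx ?orbT //;
  by case: ifP; rewrite ?eqxx ?orbT.
by split; rewrite inE ?H1 ?H2 ?H3 orbT.
Qed.

Definition pad (s : seq nat) := nth 0 s 1 :: s ++ [:: nth 0 s (size s).-2].
Definition keys s := tri (pad s).

Lemma size_keys s : size (keys s) = size s.
Proof. by rewrite /keys size_tri /pad /= size_cat addn1. Qed.

Lemma nth_pad s i : 1 < size s -> i <= (size s).+1 ->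
  nth 0 (pad s) i = if i == 0 then nth 0 s 1 else if i <= size s then nth 0 s i.-1
                    else nth 0 s (size s).-2.
Proof.
move=> H1 H2; rewrite /pad; case: i H2 => [|i] H2 //=.
rewrite nth_cat; case: ltnP => H3 //.
by have -> : i - size s = 0 by lia.
Qed.

Lemma nth_keys s u : 1 < size s -> u < size s ->
  nth (0,0,0) (keys s) u = K (nth 0 (pad s) u) (nth 0 s u) (nth 0 (pad s) u.+2).
Proof.
move=> H1 H2; rewrite /keys nth_tri; last by rewrite /pad /= size_cat /=; lia.
rewrite (nth_pad (i := u.+1) H1) //=; last by lia.
by rewrite H2.
Qed.

Lemma t1 a b c d : minn a b = minn c d -> maxn a b = maxn c d -> forall z, ((z == a) || (z == b)) = ((z == c) || (z == d)).
Proof. move=> H1 H2 z; apply/idP/idP; lia. Qed.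

Lemma t2 a b c d : (forall z, (z == a) || (z == b) = (z == c) || (z == d)) ->
  minn a b = minn c d /\ maxn a b = maxn c d.
Proof.
move=> H; have := H a; have := H b; have := H c; have := H d; rewrite !eqxx ?orbT /=.
move=> H4 H3 H2 H1; lia.
Qed.

Lemma pad_u s u : 1 < size s -> u < size s ->
  nth 0 (pad s) u = if u == 0 then nth 0 s 1 else nth 0 s u.-1.
Proof.
move=> H1 H2; rewrite nth_pad //; last by lia.
by case: (u == 0) => //; rewrite ltnW.
Qed.

Lemma pad_u2 s u : 1 < size s -> u < size s ->
  nth 0 (pad s) u.+2 = if u.+1 < size s then nth 0 s u.+1 else nth 0 s (size s).-2.
Proof. by move=> H1 H2; rewrite nth_pad. Qed.

Lemma nb_mem n s (f : 'I_n -> nat) : size s = n -> 1 < n -> (forall i : 'I_n, f i = nth 0 s i) ->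
  forall (u : 'I_n) c, (c \in nbcols (@path_rel n) f u) =
    (c == nth 0 (pad s) u) || (c == nth 0 (pad s) u.+2).
Proof.
move=> Hs Hn Hf u c; have Hu := ltn_ord u.
rewrite pad_u ?pad_u2 ?Hs //.
rewrite /nbcols; apply/mapP/idP.
  case=> w; rewrite mem_filter mem_enum andbT /path_rel => Hr ->; rewrite Hf.
  have Hw := ltn_ord w.
  case/orP: Hr => /eqP E; rewrite -E ?Hw.
    by rewrite -E in Hw; rewrite Hw eqxx orbT.
  by case: (u : nat) E => [|u'] //= _; rewrite eqxx.
case: (boolP (u == 0 :> nat)) => [/eqP u0 | u0] /=.
  rewrite u0 /= Hn orbb => /eqP ->.
  by exists (Ordinal Hn); rewrite // mem_filter mem_enum /path_rel u0.
have H1 : u.-1 < n by lia.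
move=> /orP [/eqP -> | ]; first by exists (Ordinal H1); rewrite // mem_filter mem_enum /path_rel /= andbT; lia.
case: ifP => Hu1 /eqP ->.
  by exists (Ordinal Hu1); rewrite // mem_filter mem_enum /path_rel /= andbT eqxx.
have H2 : n.-2 < n by lia.
exists (Ordinal H2); rewrite // mem_filter mem_enum /path_rel /= andbT; lia.
Qed.

Definition nodiag (k : nat * nat * nat) := (k.1.1 != k.1.2) && (k.1.1 != k.2).

Definition good (m : nat) (s : seq nat) : bool :=
  [&& 1 < size s, uniq (keys s), all nodiag (keys s),
      all (fun c => 0 < c <= m) s & all (fun c => c \in s) (iota 1 m)].

Lemma good_nl m s : good m s -> nl_coloring (@path_rel (size s)) m (fun i => nth 0 s i).
Proof.
case/and5P => Hn Hu Hd Hr Ho.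
have Hf : forall i : 'I_(size s), (fun i => nth 0 s i) i = nth 0 s i by [].
have Hkey : forall u : 'I_(size s), nodiag (K (nth 0 (pad s) u) (nth 0 s u) (nth 0 (pad s) u.+2)).
  move=> u; rewrite -nth_keys //; apply: (allP Hd); apply: mem_nth; by rewrite size_keys.
split; [split; [split|] |].
- by move=> x; apply: (allP Hr); apply: mem_nth.
- move=> c Hc; have : c \in s by apply: (allP Ho); rewrite mem_iota; lia.
  move=> Hcs; have Hi : index c s < size s by rewrite index_mem.
  by exists (Ordinal Hi); rewrite /= nth_index.
- move=> u v; rewrite /path_rel => /orP [] /eqP E.
    have Hv := ltn_ord v; rewrite -E in Hv *.
    have := Hkey u; rewrite pad_u2 // Hv /nodiag /K /= => ?; lia.
  have := Hkey u; rewrite pad_u // -E /= /nodiag /K /= => ?; lia.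
move=> u v Huv Hfuv Hnb.
have H1 := nb_mem (erefl (size s)) Hn Hf.
have := t2 (a := nth 0 (pad s) u) (b := nth 0 (pad s) u.+2)
           (c := nth 0 (pad s) v) (d := nth 0 (pad s) v.+2).
move=> /(_ _) [].
  by move=> z; rewrite -!H1; apply: Hnb.
move=> E1 E2; apply: Huv; apply: val_inj => /=.
apply: (uniqP (0,0,0) Hu); rewrite ?inE ?size_keys //.
by rewrite !nth_keys // /K E1 E2 /= Hfuv.
Qed.

Lemma bin2_dbl k : 'C(k, 2).*2 = k * k.-1.
Proof. elim: k => [|k IH] //; rewrite binS bin1 doubleD IH; case: k {IH} => //= k; nia. Qed.

Definition Nm (m : nat) := (m ^ 3 - m ^ 2) %/ 2.

Lemma Nm_eq k : Nm k = k * 'C(k, 2).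
Proof.
have H := bin2_dbl k.
rewrite /Nm (_ : k ^ 3 - k ^ 2 = (k * 'C(k, 2)) * 2) ?mulnK //.
rewrite !expnS expn0; case: k H => [|k] //= H; nia.
Qed.

Lemma NmS k : Nm k.+1 = Nm k + (3 * 'C(k, 2) + 2 * k).
Proof. have H := bin2_dbl k; rewrite !Nm_eq binS bin1; case: k H => [|k] //= H; nia. Qed.

Definition sh c a := if a < c then a else a.+1.
Definition PR n := [seq (a, b) | b <- iota 1 n, a <- iota 1 b].
Definition SK k := [seq (c, sh c ab.1, sh c ab.2) | c <- iota 1 k, ab <- PR k.-1].

Lemma sumn_iota a n : sumn (iota a n) = a * n + 'C(n, 2).
Proof.
elim: n a => [|n IH] a; first by rewrite /= muln0.
rewrite /= IH binS bin1 mulnS mulSn; lia.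
Qed.

Lemma size_SK k : size (SK k) = k * 'C(k, 2).
Proof.
rewrite /SK size_allpairs size_iota /PR size_allpairs_dep.
rewrite (eq_map (fun b => size_iota 1 b)) map_id sumn_iota mul1n.
by case: k => [|k] //=; rewrite binS bin1 addnC.
Qed.

Lemma sh_ush c a : 0 < a -> a != c -> sh c (if a < c then a else a.-1) = a.
Proof.
move=> H1 H2; rewrite /sh; case: (ltnP a c) => h.
  by rewrite h.
have -> : a.-1 < c = false by lia.
lia.
Qed.

Lemma mem_SK k c lo hi : 0 < c <= k -> 0 < lo <= hi -> hi <= k -> lo != c -> hi != c ->
  (c, lo, hi) \in SK k.
Proof.
move=> H1 H2 H3 H4 H5.
pose ush a := if a < c then a else a.-1.
apply/allpairsP; exists (c, (ush lo, ush hi)); split => //=.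
- by rewrite mem_iota; lia.
- apply/allpairsPdep; exists (ush hi), (ush lo); rewrite !mem_iota /ush.
  split => //; case: (ltnP lo c) => h1; case: (ltnP hi c) => h2;
  rewrite ?h1 ?h2; try (have -> : lo < c = false by lia);
  try (have -> : hi < c = false by lia); lia.
- rewrite /ush !sh_ush //; lia.
Qed.

Lemma lower n k (f : 'I_n -> nat) : 1 < n -> nl_coloring (@path_rel n) k f -> n <= Nm k.
Proof.
case: n f => [|n'] f // Hn [[[Hr Ho] Hp] Hnl].
set s := mkseq (fun i => f (inord i)) n'.+1.
have Hs : size s = n'.+1 by rewrite size_mkseq.
have Hf : forall i : 'I_n'.+1, f i = nth 0 s i by move=> i; rewrite nth_mkseq ?inord_val.
have Hnb := nb_mem Hs Hn Hf.
rewrite Nm_eq -size_SK -{1}Hs -size_keys.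
apply: uniq_leq_size.
- apply/(uniqP (0,0,0)) => i j; rewrite !inE size_keys Hs => Hi Hj.
  rewrite !nth_keys ?Hs // /K => [[E1 E2 E3]].
  case: (eqVneq (Ordinal Hi) (Ordinal Hj)) => [/(congr1 val) //| Hne].
  have Hfeq : f (Ordinal Hi) = f (Ordinal Hj) by rewrite !Hf.
  exfalso; apply: (Hnl _ _ (elimN eqP Hne) Hfeq) => c; rewrite !Hnb /=.
  exact: t1.
- move=> key /(nthP (0,0,0)) [i]; rewrite size_keys Hs => Hi <-.
  rewrite nth_keys ?Hs //.
  have Hpq : forall z, z \in nbcols (@path_rel n'.+1) f (Ordinal Hi) -> 0 < z <= k /\ z != nth 0 s i.
    move=> z /mapP [w]; rewrite mem_filter => /andP [Hw _] ->; split; first by apply Hr.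
    apply/eqP => E; apply: (Hp _ _ Hw); by rewrite E Hf.
  have /Hpq [Hp1 Hp2] : nth 0 (pad s) i \in nbcols (@path_rel n'.+1) f (Ordinal Hi)
    by rewrite Hnb eqxx.
  have /Hpq [Hq1 Hq2] : nth 0 (pad s) i.+2 \in nbcols (@path_rel n'.+1) f (Ordinal Hi)
    by rewrite Hnb eqxx orbT.
  have Hc := Hr (Ordinal Hi); rewrite Hf /= in Hc.
  rewrite /K; apply: mem_SK; lia.
Qed.

Arguments tri : simpl never.

Definition Mx (x : nat) (os : seq (seq nat)) := x :: flatten [seq o ++ [:: x] | o <- os].
Fixpoint lastend (p : nat) (os : seq (seq nat)) :=
  if os is o :: os' then lastend (last p o) os' else p.
Fixpoint CK x p (os : seq (seq nat)) :=
  if os is o :: os' then tri (p :: x :: o ++ [:: x]) ++ CK x (last p o) os' else [::].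

Lemma triCK x p os L : all (fun o => o != [::]) os ->
  tri (p :: x :: flatten [seq o ++ [:: x] | o <- os] ++ L) =
  CK x p os ++ tri (lastend p os :: x :: L).
Proof.
elim: os p => [|o os IH] p //= /andP [Ho Hos].
case/lastP: o Ho => [|o' a] // _.
have -> : p :: x :: ((rcons o' a ++ [:: x]) ++ flatten [seq o ++ [:: x] | o <- os]) ++ L
  = (p :: x :: o') ++ a :: x :: (flatten [seq o ++ [:: x] | o <- os] ++ L)
  by rewrite -cats1 -!catA.
rewrite triS IH // last_rcons -catA; congr (tri _ ++ _).
by rewrite -cats1 -!catA.
Qed.

Definition LV x os := K 2 1 x :: CK x 1 os ++ [:: K (lastend 1 os) x 2; K x 2 1; K 2 1 2].

Lemma LV_eq x os : all (fun o => o != [::]) os ->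
  tri (2 :: 1 :: Mx x os ++ [:: 2; 1; 2]) = LV x os.
Proof.
move=> H; rewrite /Mx cat_cons tri_cons //= -/(tri _).
by rewrite triCK.
Qed.

Lemma keys_base P : keys (P ++ [:: 2; 1]) =
  tri (nth 0 (P ++ [:: 2; 1]) 1 :: P ++ [:: 2; 1]) ++ [:: K 2 1 2].
Proof.
rewrite /keys /pad size_cat addn2 /= [nth 0 _ (size P)]nth_cat ltnn subnn /=.
have -> : nth 0 (P ++ [:: 2; 1]) 1 :: (P ++ [:: 2; 1]) ++ [:: 2] =
  (nth 0 (P ++ [:: 2; 1]) 1 :: P) ++ [:: 2, 1 & [:: 2]] by rewrite -catA.
by rewrite triS.
Qed.

Lemma keys_ext P x os : keys (P ++ [:: 2; 1] ++ Mx x os ++ [:: 2; 1]) =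
  tri (nth 0 (P ++ [:: 2; 1]) 1 :: P ++ [:: 2; 1]) ++ tri (2 :: 1 :: Mx x os ++ [:: 2; 1; 2]).
Proof.
have E1 : nth 0 (P ++ [:: 2; 1] ++ Mx x os ++ [:: 2; 1]) 1 = nth 0 (P ++ [:: 2; 1]) 1.
  by rewrite catA (nth_cat _ (P ++ _)) size_cat addn2.
have E2 : nth 0 (P ++ [:: 2; 1] ++ Mx x os ++ [:: 2; 1])
           (size (P ++ [:: 2; 1] ++ Mx x os ++ [:: 2; 1])).-2 = 2.
  rewrite !catA nth_cat !size_cat addn2 /= ltnn subnn //.
rewrite /keys /pad E1 E2.
have -> : nth 0 (P ++ [:: 2; 1]) 1 :: (P ++ [:: 2; 1] ++ Mx x os ++ [:: 2; 1]) ++ [:: 2] =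
  (nth 0 (P ++ [:: 2; 1]) 1 :: P) ++ [:: 2, 1 & Mx x os ++ [:: 2; 1; 2]] by rewrite -!catA.
by rewrite triS.
Qed.

Definition hasx x (k : nat * nat * nat) := [|| k.1.1 == x, k.1.2 == x | k.2 == x].

Lemma step_good m P os :
  good m (P ++ [:: 2; 1]) ->
  all (fun o => o != [::]) os ->
  all (fun o => all (fun a => 0 < a <= m) o) os ->
  uniq (LV m.+1 os) -> all nodiag (LV m.+1 os) ->
  (forall k, k \in LV m.+1 os -> (k == K 2 1 2) || hasx m.+1 k) ->
  good m.+1 (P ++ [:: 2; 1] ++ Mx m.+1 os ++ [:: 2; 1]).
Proof.
case/and5P => Hn Hu Hd Hr Ho Hne Hos HLu HLd HLx.
have Hm : 0 < 2 <= m by apply: (allP Hr); rewrite mem_cat inE eqxx orbT.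
rewrite keys_base in Hu Hd.
set A := tri _ in Hu Hd.
have HA : forall k, k \in A -> [/\ 0 < k.1.1 <= m, 0 < k.1.2 <= m & 0 < k.2 <= m].
  move=> k /mem_tri; rewrite -/(P ++ [:: 2; 1]).
  have Hs : forall z, z \in nth 0 (P ++ [:: 2; 1]) 1 :: P ++ [:: 2; 1] -> 0 < z <= m.
    move=> z; rewrite inE => /orP [/eqP -> | Hz]; apply: (allP Hr) => //.
    exact: mem_nth Hn.
  by case=> H1 H2 H3; split; apply: Hs.
move: Hu; rewrite cat_uniq /= andbT orbF => /andP [HuA HnA].
rewrite /good; apply/and5P; split.
- rewrite !size_cat /=; lia.
- rewrite keys_ext LV_eq // cat_uniq HuA HLu andbT.
  apply/hasPn => k Hk; apply/negP => HkA.
  case/orP: (HLx k Hk) => [/eqP Ek | Hx].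
    by move: HnA; rewrite -Ek HkA.
  have [H1 H2 H3] := HA k HkA; move: Hx; rewrite /hasx.
  by case/or3P => /eqP E; move: H1 H2 H3; rewrite E ltnn !andbF.
- rewrite keys_ext LV_eq // all_cat HLd andbT.
  by move: Hd; rewrite all_cat => /andP [].
- apply/allP => c; rewrite mem_cat => /orP [Hc | ].
    have : c \in P ++ [:: 2; 1] by rewrite mem_cat Hc.
    move/(allP Hr); lia.
  rewrite !inE => /or4P [/eqP -> | /eqP -> | /eqP -> | ]; try lia.
  rewrite mem_cat => /orP [ | ]; last by rewrite !inE; lia.
  move=> /flattenP [o /mapP [o' Ho' ->]].
  rewrite mem_cat inE => /orP [Ha | /eqP -> ]; last by lia.
  have := allP (allP Hos _ Ho') c Ha; lia.
- apply/allP => c; rewrite mem_iota => Hc.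
  case: (ltnP c m.+1) => Hcm.
    have : c \in P ++ [:: 2; 1] by apply: (allP Ho); rewrite mem_iota; lia.
    by rewrite !mem_cat !inE => /or3P [-> | -> | ->]; rewrite ?orbT.
  have -> : c = m.+1 by lia.
  by rewrite !mem_cat !inE eqxx !orbT.
Qed.

Arguments tri : simpl never.

Lemma K_l a b c : a <= c -> K a b c = (b, a, c).
Proof. by move=> h; rewrite /K (minn_idPl h) (maxn_idPr h). Qed.
Lemma K_r a b c : c <= a -> K a b c = (b, c, a).
Proof. by move=> h; rewrite /K (minn_idPr h) (maxn_idPl h). Qed.

Fixpoint EK x y p (l : seq nat) :=
  if l is a :: l' then K p x y :: K x y a :: K y a x :: EK x y a l' else [::].

Definition shp x y p l (k : nat * nat * nat) :=
  [|| (k.1.1 == x) && (k.2 == y) && (k.1.2 \in belast p l),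
      (k.1.1 == y) && (k.2 == x) && (k.1.2 \in l) |
      (k.1.2 == y) && (k.2 == x) && (k.1.1 \in l)].

Lemma EK_ok x y p l : y < x -> p <= y -> uniq (belast p l) -> uniq l ->
  all (fun a => 0 < a < y) l ->
  uniq (EK x y p l) /\ forall k, k \in EK x y p l -> shp x y p l k.
Proof.
elim: l p => [|a l IH] p Hyx Hpy Hb Hu Ha //=.
case/andP: Hb => Hpb Hb; case/andP: Hu => Hal Hu; case/andP: Ha => Ha Hl.
have [IHu IHs] := IH a Hyx (ltnW (proj2 (andP Ha))) Hb Hu Hl.
rewrite K_l // K_r; last by lia.
rewrite K_l; last by lia.
split.
  rewrite /= IHu andbT !inE.
  apply/and3P; split.
  - apply/negP => /or3P [ | | /IHs]; rewrite ?xpair_eqE; try lia.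
    rewrite /shp /= => /or3P [/andP [/andP [_ _] Hin] | | ]; first by rewrite Hin in Hpb.
      lia.
    lia.
  - apply/negP => /orP [ | /IHs]; rewrite ?xpair_eqE; try lia.
    rewrite /shp /= => /or3P [ | /andP [_ Hin] | ]; first by lia.
      by rewrite Hin in Hal.
    lia.
  - apply/negP => /IHs; rewrite /shp /= => /or3P [ | | /andP [_ Hin]]; try lia.
    by rewrite Hin in Hal.
move=> k; rewrite !inE => /or4P [/eqP -> | /eqP -> | /eqP -> | /IHs].
- by rewrite /shp /= !inE ?eqxx ?orbT.
- by rewrite /shp /= !inE ?eqxx ?orbT.
- by rewrite /shp /= !inE ?eqxx ?orbT.
rewrite /shp /= !inE => /or3P [/andP [-> ->] | /andP [-> ->] | /andP [-> ->]];
  by rewrite ?orbT.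
Qed.

Lemma CK_cat x p os1 os2 : CK x p (os1 ++ os2) = CK x p os1 ++ CK x (lastend p os1) os2.
Proof. by elim: os1 p => [|o os IH] p //=; rewrite IH catA. Qed.

Lemma lastend_cat p os1 os2 : lastend p (os1 ++ os2) = lastend (lastend p os1) os2.
Proof. by elim: os1 p => [|o os IH] p //=. Qed.

Lemma CK_edges x y p l : CK x p [seq [:: y; a] | a <- l] = EK x y p l.
Proof. by elim: l p => [|a l IH] p //=; rewrite IH. Qed.

Lemma lastend_edges y p l : lastend p [seq [:: y; a] | a <- l] = last p l.
Proof. by elim: l p => [|a l IH] p //=. Qed.

Definition tag x (k : nat * nat * nat) :=
  if k.1.1 == x then k.2 else if k.1.2 == x then k.1.1 else maxn k.1.1 k.1.2.
Definition mid x (k : nat * nat * nat) :=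
  [|| (2 < k.1.1) && (k.1.1 < x), (2 < k.1.2) && (k.1.2 < x) | (2 < k.2) && (k.2 < x)].
Definition kprop x y k := [&& tag x k == y, hasx x k, nodiag k & mid x k].

Lemma shp_props x y p l k : y < x -> 2 < y -> p <= y -> all (fun a => 0 < a < y) l ->
  shp x y p l k -> kprop x y k.
Proof.
move=> H1 H2 H3 H4; case: k => [[c d] e]; rewrite /shp /kprop /tag /hasx /nodiag /mid /=.
case/or3P => /andP [/andP [/eqP E1 /eqP E2] Hin]; subst.
- have : d <= y.
    move: (mem_belast Hin); rewrite inE => /orP [/eqP -> // | /(allP H4)]; lia.
  move=> Hd; rewrite eqxx eqxx /=; lia.
- have := allP H4 _ Hin => Hd.
  rewrite (_ : (y == x) = false); last by lia.
  rewrite (_ : (d == x) = false); last by lia.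
  rewrite (_ : maxn y d = y); last by lia.
  rewrite eqxx /=; lia.
- have := allP H4 _ Hin => Hd.
  rewrite (_ : (c == x) = false); last by lia.
  rewrite (_ : (y == x) = false); last by lia.
  rewrite (_ : maxn c y = y); last by lia.
  rewrite eqxx /=; lia.
Qed.

Definition blk (v y jj : nat) : seq (seq nat) :=
  (if y <= v then [:: [:: y]] else [::]) ++ [seq [:: y; a] | a <- rcons (iota 2 jj.-1) 1].

Lemma lastend_blk p v y jj : lastend p (blk v y jj) = 1.
Proof. by rewrite /blk lastend_cat lastend_edges last_rcons. Qed.

Lemma blk_ok x v y jj : y < x -> 2 < y -> 0 < jj < y ->
  uniq (CK x 1 (blk v y jj)) /\ forall k, k \in CK x 1 (blk v y jj) -> kprop x y k.
Proof.
move=> H1 H2 H3.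
have Hall : all (fun a => 0 < a < y) (rcons (iota 2 jj.-1) 1).
  apply/allP => a; rewrite mem_rcons inE mem_iota => /orP [/eqP -> | ]; lia.
have Hu : uniq (rcons (iota 2 jj.-1) 1).
  by rewrite rcons_uniq iota_uniq mem_iota andbT; lia.
rewrite /blk CK_cat CK_edges.
case: (leqP y v) => Hyv /=.
  have Hb : uniq (belast y (rcons (iota 2 jj.-1) 1)).
    by rewrite belast_rcons /= iota_uniq mem_iota andbT; lia.
  have [HU HS] := EK_ok H1 (leqnn y) Hb Hu Hall.
  have Ha : kprop x y (K 1 x y) by rewrite K_l ?/kprop /tag /hasx /nodiag /mid /= ?eqxx /=; lia.
  have Hb' : kprop x y (K x y x).
    rewrite K_l // /kprop /tag /hasx /nodiag /mid /=.
    rewrite (_ : (y == x) = false); last by lia.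
    rewrite eqxx /=; lia.
  split.
    rewrite HU andbT; apply/andP; split.
      rewrite inE negb_or; apply/andP; split.
        by rewrite K_l ?K_l ?xpair_eqE //; lia.
      apply/negP => /HS; rewrite /shp K_l /=; last by lia.
      rewrite (belast_rcons (T := nat)) !inE mem_rcons !inE !mem_iota; lia.
    apply/negP => /HS; rewrite /shp K_l //= mem_rcons !inE !mem_iota; lia.
  move=> k; rewrite !inE => /orP [/eqP -> // | /orP [/eqP -> // | /HS]].
  by apply: shp_props.
have Hb : uniq (belast 1 (rcons (iota 2 jj.-1) 1)).
  by rewrite belast_rcons /= iota_uniq mem_iota andbT; lia.
have [HU HS] := EK_ok (p := 1) H1 (ltnW (ltnW H2)) Hb Hu Hall.
split => // k /HS; apply: shp_props => //; lia.
Qed.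

Definition jy (Y j y : nat) := if y < Y then y.-1 else j.
Definition osl (Y j v : nat) : seq (seq nat) :=
  (if 0 < v then [:: [:: 1]] else [::]) ++
  flatten [seq blk v y (jy Y j y) | y <- iota 3 (Y - 2)] ++
  (if 1 < v then [:: [:: 2]] else [::]).
Definition PC m Y j v := ((Y == 2) && (v <= 2)) || [&& 3 <= Y, Y <= m, 0 < j, j < Y & v <= Y].

Lemma CK_FB x v g ys : CK x 1 (flatten [seq blk v y (g y) | y <- ys]) =
  flatten [seq CK x 1 (blk v y (g y)) | y <- ys].
Proof. by elim: ys => [|y ys IH] //=; rewrite CK_cat lastend_blk IH. Qed.

Lemma lastend_FB v g ys : lastend 1 (flatten [seq blk v y (g y) | y <- ys]) = 1.
Proof. by elim: ys => [|y ys IH] //=; rewrite lastend_cat lastend_blk IH. Qed.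

Lemma FB_ok x v (g : nat -> nat) ys : (forall y, y \in ys -> 2 < y < x /\ 0 < g y < y) -> uniq ys ->
  uniq (flatten [seq CK x 1 (blk v y (g y)) | y <- ys]) /\
  forall k, k \in flatten [seq CK x 1 (blk v y (g y)) | y <- ys] ->
     [&& tag x k \in ys, hasx x k, nodiag k & mid x k].
Proof.
elim: ys => [|y ys IH] Hys //= /andP [Hy Hu].
have [IHu IHs] := IH (fun z Hz => Hys z (mem_behead (s := y :: ys) Hz)) Hu.
have [Hyx Hg] := Hys y (mem_head _ _).
have [BU BS] := blk_ok v (proj2 (andP Hyx)) (proj1 (andP Hyx)) Hg.
split.
  rewrite cat_uniq BU IHu andbT /=; apply/hasPn => k /IHs /and4P [Ht _ _ _].
  apply/negP => /BS /and4P [/eqP Ht' _ _ _]; by rewrite Ht' (negbTE Hy) in Ht.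
move=> k; rewrite mem_cat => /orP [/BS /and4P [/eqP -> -> -> ->] | /IHs /and4P [Ht -> -> ->]].
  by rewrite inE eqxx.
by rewrite inE Ht orbT.
Qed.

Definition Out x b1 b2 := K 2 1 x :: (if b1 then [:: K 1 x 1; K x 1 x] else [::]) ++
  (if b2 then [:: K 1 x 2; K x 2 x] else [::]) ++
  [:: K (if b2 then 2 else 1) x 2; K x 2 1; K 2 1 2].

Lemma Out_ok x b1 b2 : 2 < x ->
  uniq (Out x b1 b2) /\
  all (fun k => ~~ mid x k && nodiag k && ((k == K 2 1 2) || hasx x k)) (Out x b1 b2).
Proof.
case: x => [|[|[|x]]] // _.
have E1 : K 2 1 x.+3 = (1, 2, x.+3) by rewrite K_l.
have E2 : K 1 x.+3 1 = (x.+3, 1, 1) by [].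
have E3 : K x.+3 1 x.+3 = (1, x.+3, x.+3) by rewrite /K minnn maxnn.
have E4 : K 1 x.+3 2 = (x.+3, 1, 2) by [].
have E5 : K x.+3 2 x.+3 = (2, x.+3, x.+3) by rewrite /K minnn maxnn.
have E6 : K 2 x.+3 2 = (x.+3, 2, 2) by [].
have E7 : K x.+3 2 1 = (2, 1, x.+3) by rewrite K_r.
rewrite /Out; case: b1; case: b2; rewrite ?E1 ?E2 ?E3 ?E4 ?E5 ?E6 ?E7; split;
  rewrite /= ?inE /mid /nodiag /hasx /= ?xpair_eqE /= ?ltnn ?eqxx ?andbF ?orbF //.
Qed.

Lemma osl_ok m Y j v : 2 <= m -> PC m Y j v ->
  [/\ all (fun o => o != [::]) (osl Y j v),
      all (fun o => all (fun a => 0 < a <= m) o) (osl Y j v),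
      uniq (LV m.+1 (osl Y j v)), all nodiag (LV m.+1 (osl Y j v)) &
      forall k, k \in LV m.+1 (osl Y j v) -> (k == K 2 1 2) || hasx m.+1 k].
Proof.
move=> Hm HP.
set ys := iota 3 (Y - 2).
have Hys : forall y, y \in ys -> 2 < y < m.+1 /\ 0 < jy Y j y < y.
  move=> y; rewrite mem_iota /jy => Hy.
  case/orP: HP => [/andP [/eqP HY _] | /and5P [H1 H2 H3 H4 H5]]; first by subst; lia.
  case: ifP => Hl; lia.
have [FU FS] := FB_ok v Hys (iota_uniq _ _).
have [OU OS] := Out_ok (x := m.+1) (0 < v) (1 < v) Hm.
have HCK : CK m.+1 1 (osl Y j v) =
  (if 0 < v then [:: K 1 m.+1 1; K m.+1 1 m.+1] else [::]) ++
  flatten [seq CK m.+1 1 (blk v y (jy Y j y)) | y <- ys] ++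
  (if 1 < v then [:: K 1 m.+1 2; K m.+1 2 m.+1] else [::]).
  rewrite /osl CK_cat.
  have -> : lastend 1 (if 0 < v then [:: [:: 1]] else [::]) = 1 by case: (0 < v).
  rewrite CK_cat CK_FB lastend_FB; congr (_ ++ _ ++ _).
    by case: (0 < v).
  by case: (1 < v).
have HLE : lastend 1 (osl Y j v) = if 1 < v then 2 else 1.
  rewrite /osl !lastend_cat.
  have -> : lastend 1 (if 0 < v then [:: [:: 1]] else [::]) = 1 by case: (0 < v).
  by rewrite lastend_FB; case: (1 < v).
have HPe : perm_eq (LV m.+1 (osl Y j v))
   (Out m.+1 (0 < v) (1 < v) ++ flatten [seq CK m.+1 1 (blk v y (jy Y j y)) | y <- ys]).
  rewrite /LV HCK HLE /Out /= perm_cons -!catA perm_cat2l.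
  by rewrite perm_catC -!catA.
split.
- apply/allP => o; rewrite /osl !mem_cat => /or3P [ | | ].
  + by case: (0 < v); rewrite ?inE // => /eqP ->.
  + move=> /flattenP [b /mapP [y _ ->]]; rewrite /blk mem_cat => /orP [ | /mapP [a _ ->]] //.
    by case: (y <= v); rewrite ?inE // => /eqP ->.
  + by case: (1 < v); rewrite ?inE // => /eqP ->.
- apply/allP => o; rewrite /osl !mem_cat => /or3P [ | | ].
  + by case: (0 < v); rewrite ?inE // => /eqP -> /=; rewrite andbT; lia.
  + move=> /flattenP [b /mapP [y Hy ->]]; have [H1 H2] := Hys y Hy.
    have Hym : y <= m by lia.
    rewrite /blk mem_cat => /orP [ | /mapP [a Ha ->]].
      by case: (y <= v); rewrite ?inE // => /eqP -> /=; rewrite andbT; lia.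
    move: Ha; rewrite mem_rcons inE mem_iota /= andbT => ?; lia.
  + by case: (1 < v); rewrite ?inE // => /eqP -> /=; rewrite andbT; lia.
- rewrite (perm_uniq HPe) cat_uniq OU FU andbT /=.
  apply/hasPn => k /FS /and4P [_ _ _ Hmid]; apply/negP => /(allP OS).
  by rewrite Hmid.
- rewrite (perm_all _ HPe) all_cat; apply/andP; split.
    by apply: sub_all OS => k /andP [/andP [_ ->]].
  by apply/allP => k /FS /and4P [].
move=> k; rewrite (perm_mem HPe) mem_cat => /orP [/(allP OS) /andP [] // | /FS /and4P [_ -> _ _]].
by rewrite orbT.
Qed.

Definition cnt (os : seq (seq nat)) := sumn [seq (size o).+1 | o <- os].

Lemma size_Mx x os : size (Mx x os) = (cnt os).+1.
Proof.
rewrite /Mx /= size_flatten /shape -map_comp /cnt; congr (_.+1); congr sumn.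
by apply: eq_map => o /=; rewrite size_cat addn1.
Qed.

Lemma cnt_cat a b : cnt (a ++ b) = cnt a + cnt b.
Proof. by rewrite /cnt map_cat sumn_cat. Qed.

Lemma cnt_flatten (F : nat -> seq (seq nat)) l : cnt (flatten [seq F y | y <- l]) = sumn [seq cnt (F y) | y <- l].
Proof. by elim: l => [|y l IH] //=; rewrite cnt_cat IH. Qed.

Lemma sumn_const (T : Type) c (l : seq T) : sumn [seq c | _ <- l] = c * size l.
Proof. by elim: l => [|a l IH] /=; [rewrite muln0 | rewrite IH mulnS]. Qed.

Lemma cnt_blk v y jj : 0 < jj -> cnt (blk v y jj) = (if y <= v then 2 else 0) + 3 * jj.
Proof.
move=> H; rewrite /blk cnt_cat; congr (_ + _); first by case: (y <= v).
rewrite /cnt -map_comp /=.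
rewrite (eq_map (g := fun _ => 3)) // sumn_const size_rcons size_iota; lia.
Qed.

Lemma sum_blk v n : sumn [seq (if y <= v then 2 else 0) + 3 * y.-1 | y <- iota 3 n] =
  2 * minn (v - 2) n + 3 * (2 * n + 'C(n, 2)).
Proof.
elim: n => [|n IH] //.
rewrite (_ : iota 3 n.+1 = iota 3 n ++ [:: 3 + n]); last by rewrite -(iotaD 3 n 1) addn1.
rewrite map_cat sumn_cat IH /= binS bin1.
case: leqP => h; lia.
Qed.

Definition ecount Y j := if Y <= 2 then 0 else 2 * (Y - 3) + 'C(Y - 3, 2) + j.

Lemma cnt_osl m Y j v : PC m Y j v -> cnt (osl Y j v) = 3 * ecount Y j + 2 * v.
Proof.
rewrite /osl /ecount !cnt_cat cnt_flatten => /orP [/andP [/eqP -> Hv] | /and5P [H1 H2 H3 H4 H5]].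
  case: v Hv => [|[|[|v]]] // _; rewrite /= ?addn0 //.
rewrite (_ : (Y <= 2) = false); last by lia.
have -> : Y - 2 = (Y - 3) + 1 by lia.
rewrite iotaD map_cat sumn_cat.
rewrite (eq_in_map (fun y => cnt (blk v y (jy Y j y)))
                   (fun y => (if y <= v then 2 else 0) + 3 * y.-1) _).1; last first.
  move=> y; rewrite mem_iota => Hy.
  have Hy' : y < Y by lia.
  rewrite cnt_blk /jy Hy' //; lia.
rewrite sum_blk /=; have -> : 3 + (Y - 3) = Y by lia.
rewrite cnt_blk /jy ?ltnn //.
case: (ltnP 0 v) => h1; case: (ltnP 1 v) => h2; case: (leqP Y v) => h3; rewrite /cnt /=; lia.
Qed.

Lemma last_Mx d x os : last d (Mx x os) = x.
Proof.
rewrite /Mx /=; elim/last_ind: os => [|os o IH] //.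
by rewrite map_rcons flatten_rcons last_cat last_cat /=.
Qed.

Lemma step m P Y j v : 2 <= m -> good m (P ++ [:: 2; 1]) -> PC m Y j v ->
  let s' := P ++ [:: 2; 1] ++ Mx m.+1 (osl Y j v) ++ [:: 2; 1] in
  [/\ good m.+1 s', size s' = size P + 2 + (3 * (ecount Y j).+1 + 2 * v),
      nth 0 s' (size s' - 3) = m.+1, s' = (P ++ [:: 2; 1] ++ Mx m.+1 (osl Y j v)) ++ [:: 2; 1] &
      take 2 s' = take 2 (P ++ [:: 2; 1])].
Proof.
move=> Hm Hg HP s'.
have [H1 H2 H3 H4 H5] := osl_ok Hm HP.
split.
- exact: step_good.
- by rewrite /s' !size_cat size_Mx (cnt_osl HP) /=; lia.
- have -> : s' = (P ++ [:: 2; 1] ++ Mx m.+1 (osl Y j v)) ++ [:: 2; 1] by rewrite /s' !catA.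
  set Q := P ++ [:: 2; 1] ++ Mx m.+1 (osl Y j v).
  have HQ : 0 < size Q by rewrite /Q !size_cat /=; lia.
  rewrite size_cat /= (_ : size Q + 2 - 3 = (size Q).-1); last by lia.
  rewrite nth_cat ifT; last by lia.
  by rewrite nth_last /Q !last_cat last_Mx.
- by rewrite /s' !catA.
- by rewrite /s' catA takel_cat // size_cat addn2.
Qed.

Lemma binSS k : 'C(k.+2, 2) = 'C(k, 2) + 2 * k + 1.
Proof. rewrite !binS ?bin0 !bin1; lia. Qed.

Lemma tri_ok m e : 2 <= m -> 0 < e <= 'C(m, 2) ->
  exists Y j, ((Y == 2) && (e == 1)) || [&& 3 <= Y, Y <= m, 0 < j, j < Y & e == (ecount Y j).+1].
Proof.
elim: m e => [|m IH] e // Hm He.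
case: (ltnP m 2) => Hm2.
  have Em : m = 1 by lia.
  subst; exists 2, 0; move: He; rewrite (_ : 'C(2, 2) = 1) //; lia.
case: (leqP e 'C(m, 2)) => Hle.
  have [Y [j Hj]] : exists Y j, ((Y == 2) && (e == 1)) ||
       [&& 3 <= Y, Y <= m, 0 < j, j < Y & e == (ecount Y j).+1].
    by apply: IH => //; lia.
  exists Y, j; case/orP: Hj => [-> // | /and5P [-> ? -> -> ->]]; rewrite andbT /=; lia.
exists m.+1, (e - 'C(m, 2)); apply/orP; right.
case: m IH Hm Hm2 He Hle => [|[|m]] // IH Hm Hm2 He Hle.
rewrite /ecount (_ : (m.+3 <= 2) = false) //.
rewrite (_ : m.+3 - 3 = m) ?subSS ?subn0 //.
move: He Hle; rewrite binS bin1 binSS => He Hle.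
apply/and5P; split; lia.
Qed.

Definition Dm m := 3 * 'C(m, 2) + 2 * m.

Lemma ecount_m m j : 3 <= m -> (ecount m j).+1 = 'C(m, 2) - (m - 1) + j.
Proof.
move=> Hm; rewrite /ecount (_ : (m <= 2) = false); last by lia.
case: m Hm => [|[|[|m]]] // _; rewrite !subSS subn0 !binS ?bin0 !bin1 /=; lia.
Qed.

Lemma C2_ge m : 4 <= m -> 6 <= 'C(m, 2).
Proof. by move=> Hm; apply: (leq_trans _ (leq_bin2l 2 Hm)). Qed.

Lemma C2_ge2 m : 'C(m, 2) + m = 'C(m.+1, 2).
Proof. by rewrite binS bin1 addnC. Qed.

Lemma cost_ok m c : 4 <= m -> (c == 3) || (5 <= c <= Dm m - 2) || (c == Dm m) ->
  exists Y j v, PC m Y j v /\ c = 3 * (ecount Y j).+1 + 2 * v.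
Proof.
move=> Hm Hc; have HE := C2_ge Hm.
have HC : m - 1 <= 'C(m, 2).
  have := C2_ge2 m.-1; rewrite prednK; last by lia.
  lia.
rewrite /Dm in Hc.
case: (leqP c (3 * 'C(m, 2))) => Hc3.
  pose e := if c %% 3 == 0 then c %/ 3 else if c %% 3 == 1 then (c - 4) %/ 3 else (c - 2) %/ 3.
  pose v := if c %% 3 == 0 then 0 else if c %% 3 == 1 then 2 else 1.
  have Hev : c = 3 * e + 2 * v /\ 0 < e <= 'C(m, 2) /\ v <= 2.
    rewrite /e /v; case: ifP => h1; [|case: ifP => h2]; lia.
  case: Hev => Hev [He Hv].
  have [Y [j HYj]] := tri_ok (ltnW (ltnW Hm)) He.
  exists Y, j, v; case/orP: HYj => [/andP [/eqP HY /eqP He1] | /and5P [H1 H2 H3 H4 /eqP H5]].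
    split; first by rewrite /PC HY eqxx Hv.
    by rewrite Hev He1 HY /ecount.
  by rewrite /PC H1 H2 H3 H4 /= -H5 Hev; split => //; apply/orP; right; lia.
case: (boolP (odd (c - 3 * 'C(m, 2)))) => Hodd.
  exists m, (m - 2), ((c - 3 * 'C(m, 2) + 3) %/ 2).
  rewrite /PC ecount_m; last by lia.
  have Hv : (c - 3 * 'C(m, 2) + 3) %/ 2 <= m.
    have : c != 3 * 'C(m, 2) + 2 * m.
      apply/eqP => E; move: Hodd; rewrite E.
      rewrite (_ : 3 * 'C(m, 2) + 2 * m - 3 * 'C(m, 2) = m.*2); last by lia.
      by rewrite odd_double.
    have := odd_double_half (c - 3 * 'C(m, 2)); rewrite Hodd /= => H.
    have H' : c - 3 * 'C(m, 2) <> (m.-1).*2 by move=> E; move: Hodd; rewrite E odd_double.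
    lia.
  split; first by apply/orP; right; apply/and5P; split; lia.
  have := odd_double_half (c - 3 * 'C(m, 2)); rewrite Hodd /= => H.
  lia.
exists m, (m - 1), ((c - 3 * 'C(m, 2)) %/ 2).
rewrite /PC ecount_m; last by lia.
split; first by apply/orP; right; apply/and5P; split; lia.
have := odd_double_half (c - 3 * 'C(m, 2)); rewrite (negbTE Hodd) /= => H.
lia.
Qed.

Definition invb m s := [&& good m s, nth 0 s (size s - 3) == m, drop (size s - 2) s == [:: 2; 1]
  & (size s != Nm m - 1) ==> (take 2 s == [:: 2; 1])].

Definition w4 : seq (seq nat) := [:: [:: 2; 1; 3; 1; 3; 2; 1; 4; 2; 1]; [:: 2; 1; 3; 2; 1; 4; 3; 1; 4; 2; 1]; [:: 2; 1; 3; 1; 3; 2; 3; 2; 1; 4; 2; 1]; [:: 2; 1; 3; 1; 3; 2; 1; 4; 3; 1; 4; 2; 1]; [:: 2; 1; 3; 1; 3; 2; 3; 2; 1; 4; 1; 4; 2; 1]; [:: 2; 1; 3; 1; 3; 2; 3; 2; 1; 4; 3; 1; 4; 2; 1]; [:: 2; 1; 3; 1; 3; 2; 3; 2; 1; 4; 1; 4; 2; 4; 2; 1]; [:: 2; 1; 3; 1; 3; 2; 3; 2; 1; 4; 1; 4; 3; 1; 4; 2; 1]; [:: 2; 1; 3; 1; 3; 2; 3; 2; 1; 4; 3; 2; 4; 3; 1; 4; 2; 1]; [:: 2; 1; 3; 1; 3; 2; 3; 2; 1; 4; 1; 4; 3; 1; 4; 2; 4; 2; 1]; [:: 2; 1;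 3; 1; 3; 2; 3; 2; 1; 4; 1; 4; 3; 2; 4; 3; 1; 4; 2; 1]; [:: 2; 1; 3; 1; 3; 2; 3; 2; 1; 4; 1; 4; 3; 4; 3; 1; 4; 2; 4; 2; 1]; [:: 2; 1; 3; 1; 3; 2; 3; 2; 1; 4; 1; 4; 3; 2; 4; 3; 1; 4; 2; 4; 2; 1]; [:: 3; 2; 3; 1; 3; 1; 2; 1; 4; 1; 4; 3; 4; 3; 2; 4; 3; 1; 4; 2; 4; 2; 1]; [:: 2; 1; 3; 1; 3; 2; 3; 2; 1; 4; 1; 4; 3; 4; 3; 2; 4; 3; 1; 4; 2; 4; 2; 1]].
Definition w3 : seq (seq nat) := [:: [:: 3; 2; 1]; [:: 1; 3; 2; 1]; [:: 1; 3; 1; 2; 1]; [:: 1; 3; 2; 3; 2; 1]; [:: 2; 1; 3; 1; 3; 2; 1]; [:: 3; 2; 3; 1; 3; 1; 2; 1]; [:: 2; 1; 3; 1; 3; 2; 3; 2; 1]].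

Lemma w4_ok : all (invb 4) w4 && (map size w4 == iota 10 15).
Proof. by vm_compute. Qed.

Lemma w3_ok : all (fun s => good 3 s && (drop (size s - 2) s == [:: 2; 1])) w3 && (map size w3 == iota 3 7)
  && (nth 0 (nth [::] w3 6) 6 == 3) && (take 2 (nth [::] w3 6) == [:: 2; 1]).
Proof. by vm_compute. Qed.

Definition Inv m n s := [/\ size s = n, good m s, nth 0 s (n - 3) = m,
  exists P, s = P ++ [:: 2; 1] & (n != Nm m - 1 -> take 2 s = [:: 2; 1])].

Lemma invb_Inv m s : invb m s -> Inv m (size s) s.
Proof.
case/and4P => H1 /eqP H2 /eqP H3 /implyP H4; split => //.
  by exists (take (size s - 2) s); rewrite -H3 cat_take_drop.
by move=> /H4 /eqP.
Qed.

Lemma Dm_ge m : 4 <= m -> 15 <= Dm m.-1.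
Proof.
move=> Hm; rewrite /Dm.
have H3 : 3 <= 'C(m.-1, 2).
  have Hm1 : 3 <= m.-1 by lia.
  exact: (leq_trans (isT : 3 <= 'C(3, 2)) (leq_bin2l 2 Hm1)).
lia.
Qed.

Lemma levels m : 4 <= m -> forall n, Nm m.-1 < n <= Nm m -> exists s, Inv m n s.
Proof.
elim: m => [|m IH] // Hm n Hn.
case: (ltnP m 4) => Hm4.
  have Em : m = 3 by lia.
  subst m; move: Hn; rewrite (_ : Nm 3 = 9) // (_ : Nm 4 = 24) // => Hn.
  case/andP: w4_ok => /allP Ha /eqP Hs.
  have Hi : n - 10 < size w4 by rewrite -(size_map size) Hs size_iota; lia.
  exists (nth [::] w4 (n - 10)).
  have := Ha _ (mem_nth [::] Hi) => /invb_Inv.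
  by rewrite -(nth_map _ 0) // Hs nth_iota; [rewrite (_ : 10 + (n - 10) = n) //; lia | lia].
have HNS : Nm m.+1 = Nm m + Dm m by rewrite NmS.
have HNm : Nm m = Nm m.-1 + Dm m.-1 by rewrite -{1}(prednK (_ : 0 < m)) ?NmS //; lia.
have HD := Dm_ge Hm4.
have HDm : 15 <= Dm m.
  by have := Dm_ge (_ : 4 <= m.+1); rewrite /=; apply.
move: Hn; rewrite [(m.+1).-1]/= => Hn.
set c0 := n - Nm m.
have Hc0 : c0 = n - Nm m by [].
pose L := if c0 == 1 then Nm m - 2 else if c0 == 2 then Nm m - 3 else
          if c0 == 4 then Nm m - 2 else if c0 == Dm m - 1 then Nm m - 1 else Nm m.
have HL : Nm m.-1 < L <= Nm m by rewrite /L; repeat case: ifP => ?; lia.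
have HLn : L < n by rewrite /L; repeat case: ifP => ?; lia.
have Hc : (n - L == 3) || (5 <= n - L <= Dm m - 2) || (n - L == Dm m).
  rewrite /L; repeat case: ifP => ?; lia.
have HL1 : L = Nm m - 1 -> n = Nm m.+1 - 1.
  rewrite /L; repeat case: ifP => ?; lia.
clearbody L.
have [s [Hs1 Hs2 Hs3 [P HP] Hs5]] := IH Hm4 L HL.
have [Y [j [v [HPC Hcv]]]] := cost_ok Hm4 Hc.
rewrite HP in Hs2.
have [G1 G2 G3 G4 G5] := step (ltnW (ltnW Hm4)) Hs2 HPC.
exists (P ++ [:: 2; 1] ++ Mx m.+1 (osl Y j v) ++ [:: 2; 1]).
have Hsz : size (P ++ [:: 2; 1] ++ Mx m.+1 (osl Y j v) ++ [:: 2; 1]) = n.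
  rewrite G2 -Hcv; move: Hs1; rewrite HP size_cat /= => E; lia.
split => //.
- by rewrite -{1}Hsz G3.
- by exists (P ++ [:: 2; 1] ++ Mx m.+1 (osl Y j v)).
move=> Hn1; rewrite G5 -HP; apply: Hs5; apply/eqP => E.
by move: Hn1; rewrite (HL1 E) eqxx.
Qed.

Lemma ends21 s : 1 < size s -> drop (size s - 2) s = [:: 2; 1] ->
  nth 0 s (size s - 2) = 2 /\ nth 0 s (size s - 1) = 1.
Proof.
move=> H1 H2; have := nth_drop (size s - 2) 0 s 0; have := nth_drop (size s - 2) 0 s 1.
rewrite H2 /= addn0 (_ : size s - 2 + 1 = size s - 1); last by lia.
by move=> <- <-.
Qed.

Lemma exists_walk n m : 2 <= n -> n <= Nm m -> (forall k, n <= Nm k -> m <= k) ->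
  exists s, [/\ size s = n, good m s, nth 0 s (n - 2) = 2, nth 0 s (n - 1) = 1 &
     ((9 <= n -> nth 0 s (n - 3) = m) /\
     (9 <= n -> n != Nm m - 1 -> nth 0 s 0 = 2 /\ nth 0 s 1 = 1))].
Proof.
move=> Hn HnN Hmin.
have Hm2 : 2 <= m.
  case: m HnN Hmin => [|[|m]] // HnN Hmin; by move: HnN; rewrite (_ : Nm _ = 0) //; lia.
have Hlo : Nm m.-1 < n.
  rewrite ltnNge; apply/negP => /Hmin; lia.
case: (ltnP m 4) => Hm4.
  case: m Hm2 Hm4 Hlo HnN Hmin => [|[|[|[|m]]]] // _ _ Hlo HnN Hmin.
    have -> : n = 2 by move: HnN; rewrite (_ : Nm 2 = 2) //; lia.
    by exists [:: 2; 1]; split => //; vm_compute.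
  move: Hlo HnN; rewrite (_ : Nm 2 = 2) // (_ : Nm 3 = 9) // => Hlo HnN.
  case/andP: w3_ok => /andP [/andP [/allP Ha /eqP Hs] /eqP H6] /eqP H7.
  have Hi : n - 3 < size w3 by rewrite -(size_map size) Hs size_iota; lia.
  have Hsz : size (nth [::] w3 (n - 3)) = n.
    by rewrite -(nth_map _ 0) // Hs nth_iota; [lia | lia].
  have Hmem := mem_nth [::] Hi.
  have H9s : n = 9 -> nth [::] w3 (n - 3) = nth [::] w3 6 by move=> ->.
  move: (nth [::] w3 (n - 3)) Hsz Hmem H9s => s Hsz Hmem H9s.
  exists s.
  have /andP [Hg /eqP Hd] := Ha _ Hmem.
  have Hs2 : 1 < size s by rewrite Hsz; lia.
  have [E2 E1] := ends21 Hs2 Hd.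
  rewrite Hsz in E1 E2.
  split; [exact: Hsz | exact: Hg | exact: E2 | exact: E1 | split].
  - move=> H9; have E9 : n = 9 by lia.
    by rewrite (H9s E9) E9.
  - move=> H9; have E9 : n = 9 by lia.
    rewrite (H9s E9).
    by split; [rewrite -(nth_take 0 (isT : 0 < 2)) H7 | rewrite -(nth_take 0 (isT : 1 < 2)) H7].
have Hr : Nm m.-1 < n <= Nm m by rewrite Hlo HnN.
have [s [Hs Hg H3 [P HP] H5]] := levels Hm4 Hr.
have HN3 : 9 < n.
  have : Nm 3 <= Nm m.-1.
    rewrite !Nm_eq; apply: leq_mul; [lia | apply: leq_bin2l; lia].
  rewrite (_ : Nm 3 = 9) //; lia.
have HPs : size P = n - 2 by move: Hs; rewrite HP size_cat /=; lia.
have Hd : drop (size s - 2) s = [:: 2; 1].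
  by rewrite HP size_cat /= (_ : size P + 2 - 2 = size P) ?drop_size_cat //; lia.
have Hs2 : 1 < size s by rewrite Hs; lia.
have [E2 E1] := ends21 Hs2 Hd.
rewrite Hs in E1 E2.
exists s; split; [exact: Hs | exact: Hg | exact: E2 | exact: E1 | split].
- by move=> _; exact: H3.
- move=> _ /H5 Ht; split.
    by rewrite -(nth_take 0 (isT : 0 < 2)) Ht.
  by rewrite -(nth_take 0 (isT : 1 < 2)) Ht.
Qed.

Theorem theorem2 (n m : nat) :
  2 <= n ->
  n <= (m ^ 3 - m ^ 2) %/ 2 ->
  (forall k, n <= (k ^ 3 - k ^ 2) %/ 2 -> m <= k) ->
  is_chiL2 (@path_rel n) m /\
  exists f : 'I_n -> nat,
    nl_coloring (@path_rel n) m f /\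
    (forall i : 'I_n, val i = n - 2 -> f i = 2) /\
    (forall i : 'I_n, val i = n - 1 -> f i = 1) /\
    (9 <= n -> forall i : 'I_n, val i = n - 3 -> f i = m) /\
    (9 <= n -> n != (m ^ 3 - m ^ 2) %/ 2 - 1 ->
       (forall i : 'I_n, val i = 0 -> f i = 2) /\
       (forall i : 'I_n, val i = 1 -> f i = 1)).
Proof.
move=> Hn HnN Hmin.
have [s [Hs Hg H2 H1 [H3 H4]]] := exists_walk Hn HnN Hmin.
subst n.
have Hnl := good_nl Hg.
split.
  split; first by exists (fun i : 'I_(size s) => nth 0 s i).
  move=> k f Hf; apply: Hmin; exact: (lower Hn Hf).
exists (fun i : 'I_(size s) => nth 0 s i); split => //.
split; first by move=> i /= ->.
split; first by move=> i /= ->.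
split; first by move=> H9 i /= ->; apply: H3.
move=> H9 Hne; have [E0 E1] := H4 H9 Hne.
by split => i /= ->.
Qed.
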